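(* Let $\mathcal{H}_A$ be a Hilbert space of finite dimension $d_A$, $\rho_A$ a quantum state on $\mathcal{H}_A$, and $\gamma>0$. Then for every positive integer $n$, $$\overline{S}_{\overline{\epsilon}}(A^n)_{\rho^{\otimes n}}\le n\big(S(\rho_A)+\gamma\big),\qquad \underline{S}_{\underline{\epsilon}}(A^n)_{\rho^{\otimes n}}\ge n\big(S(\rho_A)-\gamma\big),$$ where $\overline{\epsilon}=(1+n)^{d_A}2^{-n\overline{D}(\rho_A,\gamma)}$ and $\underline{\epsilon}=(1+n)^{d_A}2^{-n\underline{D}(\rho_A,\gamma)}$, with $$\overline{D}(\rho,\gamma)=\inf_{\sigma:\ \rho\sigma=\sigma\rho,\ S(\sigma)+D(\sigma\|\rho)>S(\rho)+\gamma}D(\sigma\|\rho),\qquad \underline{D}(\rho,\gamma)=\inf_{\sigma:\ \rho\sigma=\sigma\rho,\ S(\sigma)+D(\sigma\|\rho)<S(\rho)-\gamma}D(\sigma\|\rho),$$ the infima being over normalized states $\sigma$ on $\mathcal{H}_A$.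
   Context: $S(\rho)=-\mathrm{Tr}\rho\log_2\rho$ is the von Neumann entropy and $D(\sigma\|\rho)=\mathrm{Tr}[\sigma(\log_2\sigma-\log_2\rho)]$ the relative entropy. For a Hermitian $Y=\sum_i\lambda_iE_i$, $\{Y\ge0\}=\sum_{i:\lambda_i\ge0}E_i$, and $\{\rho\ge c\}$ means $\{\rho-c\mathbb{I}\ge0\}$ (similarly for $\le$). For a state $\rho$ of a system $A$ and $\epsilon\ge0$, the information spectrum sup- and inf-entropies are $$\overline{S}_\epsilon(A)_\rho=\inf\{\lambda:\mathrm{Tr}[\{\rho\ge2^{-\lambda}\}\rho]\ge1-\epsilon\},\qquad \underline{S}_\epsilon(A)_\rho=\sup\{\lambda:\mathrm{Tr}[\{\rho\le2^{-\lambda}\}\rho]\ge1-\epsilon\}.$$ Here $A^n$ denotes $n$ copies of $A$ in the state $\rho_A^{\otimes n}$. *)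

(* Defs.v *)
From HB Require Import structures.
From mathcomp Require Import all_boot all_order all_algebra.
From mathcomp Require Import sesquilinear spectral.
From mathcomp Require Import complex mxtens.
From mathcomp Require Import all_classical all_reals all_analysis.
Set Implicit Arguments. Unset Strict Implicit. Unset Printing Implicit Defensive.
Import Order.TTheory GRing.Theory Num.Theory Num.Def.
Local Open Scope ring_scope.
Local Open Scope classical_set_scope.

Section QDefs.
Variable R : realType.
Local Notation C := R[i].

Definition toC (x : R) : C := Complex x 0.

Definition log2 (x : R) : R := ln x / ln 2.

Definition adjmx {m n} (A : 'M[C]_(m, n)) : 'M[C]_(n, m) := (map_mx conjC A)^T.

Definition hermitian {d} (A : 'M[C]_d) : Prop := adjmx A = A.

Definition psd {d} (A : 'M[C]_d) : Prop :=
  hermitian A /\ forall v : 'rV[C]_d, 0 <= (v *m A *m adjmx v) 0 0.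

Definition is_state {d} (rho : 'M[C]_d) : Prop := psd rho /\ \tr rho = 1.

(* eigenvalues of a Hermitian matrix, from the spectral decomposition
   A = P^-1 diag(sp) P of mathcomp's spectral.v (P unitary) *)
Definition eigval {d} (A : 'M[C]_d) (i : 'I_d) : R := complex.Re (spectral_diag A 0 i).

Definition fcalc {d} (f : R -> R) (A : 'M[C]_d) : 'M[C]_d :=
  invmx (spectralmx A) *m diag_mx (\row_i toC (f (eigval A i))) *m spectralmx A.

Definition proj_ge0 {d} (Y : 'M[C]_d) : 'M[C]_d :=
  fcalc (fun x => if 0 <= x then 1 else 0) Y.
Definition proj_le0 {d} (Y : 'M[C]_d) : 'M[C]_d :=
  fcalc (fun x => if x <= 0 then 1 else 0) Y.

Definition proj_ge {d} (rho : 'M[C]_d) (c : R) : 'M[C]_d := proj_ge0 (rho - (toC c)%:M).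
Definition proj_le {d} (rho : 'M[C]_d) (c : R) : 'M[C]_d := proj_le0 (rho - (toC c)%:M).

Definition retr {d} (A : 'M[C]_d) : R := complex.Re (\tr A).

Definition vN_entropy {d} (rho : 'M[C]_d) : R := - retr (rho *m fcalc log2 rho).

Definition rel_entropy {d} (sigma rho : 'M[C]_d) : \bar R :=
  if (kermx rho <= kermx sigma)%MS
  then (retr (sigma *m (fcalc log2 sigma - fcalc log2 rho)))%:E
  else +oo%E.

Definition sup_spec_entropy {d} (eps : R) (rho : 'M[C]_d) : \bar R :=
  ereal_inf (EFin @` [set l : R | 1 - eps <= retr (proj_ge rho (powR 2 (- l)) *m rho)]).

Definition inf_spec_entropy {d} (eps : R) (rho : 'M[C]_d) : \bar R :=
  ereal_sup (EFin @` [set l : R | 1 - eps <= retr (proj_le rho (powR 2 (- l)) *m rho)]).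

Definition Dbar {d} (rho : 'M[C]_d) (gamma : R) : \bar R :=
  ereal_inf [set rel_entropy sigma rho | sigma in
    [set sigma : 'M[C]_d | is_state sigma /\ rho *m sigma = sigma *m rho /\
       ((vN_entropy rho + gamma)%:E < (vN_entropy sigma)%:E + rel_entropy sigma rho)%E]].

Definition Dund {d} (rho : 'M[C]_d) (gamma : R) : \bar R :=
  ereal_inf [set rel_entropy sigma rho | sigma in
    [set sigma : 'M[C]_d | is_state sigma /\ rho *m sigma = sigma *m rho /\
       ((vN_entropy sigma)%:E + rel_entropy sigma rho < (vN_entropy rho - gamma)%:E)%E]].

(* (1+n)^dA * 2^(-n D), with 2^(-oo) = 0 *)
Definition eps_of (n dA : nat) (D : \bar R) : R :=
  match D with
  | EFin r => (1 + n%:R) ^+ dA * powR 2 (- (n%:R * r))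
  | +oo%E => 0
  | -oo%E => 0
  end.

End QDefs.

(* Main.v *)
Require Import Defs.
From HB Require Import structures.
From mathcomp Require Import all_boot all_order all_algebra.
From mathcomp Require Import sesquilinear spectral.
From mathcomp Require Import complex mxtens.
From mathcomp Require Import all_classical all_reals all_analysis.
From mathcomp Require Import ring lra.
Import Order.TTheory GRing.Theory Num.Theory Num.Def.
Set Implicit Arguments.
Local Open Scope ring_scope.

Section PartA.
Variable R : realType.
Local Notation C := R[i].
Local Notation dg e := (diag_mx (\row_i toC (e i))).

Lemma toCE (x : R) : toC x = (x%:C)%C. Proof. by []. Qed.
Lemma conjC_toC (x : R) : conjC (toC x) = toC x.
Proof. rewrite toCE. exact: conjc_real. Qed.
Lemma ReC (x : R) : complex.Re (toC x) = x. Proof. by []. Qed.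
Lemma toCD (x y : R) : toC (x + y) = toC x + toC y.
Proof. by rewrite !toCE rmorphD. Qed.
Lemma toCB (x y : R) : toC (x - y) = toC x - toC y.
Proof. by rewrite !toCE rmorphB. Qed.
Lemma toCM (x y : R) : toC (x * y) = toC x * toC y.
Proof. by rewrite !toCE rmorphM. Qed.
Lemma toC1 : toC (1:R) = 1. Proof. by []. Qed.
Lemma toC0 : toC (0:R) = 0. Proof. by []. Qed.
Lemma toC_sum (I : finType) (F : I -> R) : toC (\sum_i F i) = \sum_i toC (F i).
Proof. by rewrite toCE rmorph_sum. Qed.
Lemma toC_inj : injective (@toC R).
Proof. by move=> x y [->]. Qed.

Lemma adjmxE m n (A : 'M[C]_(m,n)) : adjmx A = map_mx conjC (A ^T).
Proof. by rewrite /adjmx map_trmx. Qed.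

Lemma adjmx_mul m n p (A : 'M[C]_(m,n)) (B : 'M[C]_(n,p)) :
  adjmx (A *m B) = adjmx B *m adjmx A.
Proof. by rewrite /adjmx map_mxM trmx_mul. Qed.

Lemma adjmxK m n (A : 'M[C]_(m,n)) : adjmx (adjmx A) = A.
Proof. by apply/matrixP=> i j; rewrite !mxE conjCK. Qed.

Lemma adjmx_dg n (e : 'I_n -> R) : adjmx (dg e) = dg e.
Proof.
apply/matrixP=> i j; rewrite !mxE rmorphMn /= conjC_toC eq_sym.
by case: eqP => [->|].
Qed.

Lemma unitary_inv n (V : 'M[C]_n) : V \is unitarymx -> invmx V = adjmx V.
Proof. by move=> /invmx_unitary ->; rewrite adjmxE. Qed.

Lemma unitary_adj_mul n (V : 'M[C]_n) : V \is unitarymx -> adjmx V *m V = 1%:M.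
Proof. by move=> Vu; rewrite -unitary_inv // mulVmx // unitarymx_unit. Qed.

Lemma unitary_mul_adj n (V : 'M[C]_n) : V \is unitarymx -> V *m adjmx V = 1%:M.
Proof. by move=> Vu; rewrite -unitary_inv // mulmxV // unitarymx_unit. Qed.

Lemma dg_mul n (a b : 'I_n -> R) : dg a *m dg b = dg (fun i => a i * b i).
Proof.
by apply/matrixP=> i j; rewrite mul_diag_mx !mxE mulrnAr toCM.
Qed.

Lemma conj_mul n (V : 'M[C]_n) (a b : 'I_n -> R) : V \is unitarymx ->
  (invmx V *m dg a *m V) *m (invmx V *m dg b *m V)
  = invmx V *m dg (fun i => a i * b i) *m V.
Proof.
move=> Vu; rewrite -!mulmxA; congr (_ *m _).
by rewrite !mulmxA mulmxK ?unitarymx_unit // dg_mul.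
Qed.

Lemma retr_conj n (V : 'M[C]_n) (a : 'I_n -> R) : V \is unitarymx ->
  retr (invmx V *m dg a *m V) = \sum_i a i.
Proof.
move=> Vu; rewrite /retr mxtrace_mulC mulmxA mulmxV ?unitarymx_unit // mul1mx.
by rewrite mxtrace_diag (eq_bigr (fun i => toC (a i))) ?(@ReC) -?toC_sum // => i _; rewrite mxE.
Qed.

Lemma fcalc_eq n (A V : 'M[C]_n) (e : 'I_n -> R) (f : R -> R) :
  V \is unitarymx -> A = invmx V *m dg e *m V ->
  fcalc f A = invmx V *m dg (fun i => f (e i)) *m V.
Proof.
move=> Vu HA.
have Anorm : A \is normalmx.
  by apply/orthomx_spectral_subproof; exists (V, \row_i toC (e i)).
have HP := orthomx_spectralP Anorm.
set P := spectralmx A in HP *; set D := spectral_diag A in HP *.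
have Pu : P \in unitmx by exact: spectral_unit.
have Vi : V \in unitmx by exact: unitarymx_unit.
set W := P *m invmx V.
have key : diag_mx D *m W = W *m dg e.
  rewrite /W; transitivity (P *m A *m invmx V).
    by rewrite HP !mulmxA mulmxV // mul1mx.
  by rewrite {1}HA !mulmxA mulmxK.
have hW : P = W *m V by rewrite /W -mulmxA mulVmx // mulmx1.
have hW2 : invmx P *m W = invmx V.
  by rewrite /W mulmxA mulVmx // mul1mx.
clearbody W.
have key2 : diag_mx (\row_i toC (f (eigval A i))) *m W = W *m dg (fun i => f (e i)).
  apply/matrixP=> i j; move/matrixP: key => /(_ i j).
  rewrite !mul_diag_mx !mul_mx_diag !mxE.
  have [->|Wn] := eqVneq (W i j) 0; first by rewrite !mulr0 !mul0r.
  move=> h; have hD : D 0 i = toC (e j).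
    by apply: (mulIf Wn); rewrite h mulrC.
  by rewrite /eigval -/D hD ReC mulrC.
rewrite /fcalc -/P.
rewrite {2}hW mulmxA -(mulmxA _ _ W) key2 !mulmxA.
by rewrite hW2.
Qed.


Lemma herm_normal n (A : 'M[C]_n) : Defs.hermitian A -> A \is normalmx.
Proof.
rewrite /Defs.hermitian => h; apply/normalmxP.
by have -> : map_mx conjC (A ^T) = A by rewrite -adjmxE.
Qed.

Lemma adjmx_row n m (V : 'M[C]_(n,m)) i : adjmx (row i V) = col i (adjmx V).
Proof. by apply/matrixP=> a b; rewrite !mxE. Qed.

Lemma psd_entry n (S V : 'M[C]_n) i : psd S -> 0 <= (V *m S *m adjmx V) i i.
Proof.
move=> [_ /(_ (row i V))]; rewrite adjmx_row -row_mul.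
suff -> : (row i (V *m S) *m col i (adjmx V)) 0 0 = (V *m S *m adjmx V) i i by [].
by rewrite !mxE; apply: eq_bigr => k _; rewrite !mxE.
Qed.

Lemma ge0_toC (z : C) : 0 <= z -> z = toC (complex.Re z) /\ 0 <= complex.Re z.
Proof. by case: z => a b; rewrite lecE /= => /andP[/eqP -> h]; split. Qed.

Lemma psd_spec n (S : 'M[C]_n) : psd S ->
  S = invmx (spectralmx S) *m dg (eigval S) *m spectralmx S /\ (forall i, 0 <= eigval S i).
Proof.
move=> hS; have Sn := herm_normal hS.1.
have HP := orthomx_spectralP Sn.
have Pu := spectral_unitarymx S.
have hD : forall i, spectral_diag S 0 i = toC (eigval S i) /\ 0 <= eigval S i.
  move=> i; have := psd_entry (spectralmx S) i hS.
  rewrite {2}HP -unitary_inv // !mulmxA mulmxV ?unitarymx_unit // mul1mx mulmxK ?unitarymx_unit //.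
  by rewrite mxE eqxx mulr1n => /ge0_toC.
split; last by move=> i; case: (hD i).
rewrite {1}HP; congr (_ *m diag_mx _ *m _); apply/rowP=> i; rewrite mxE.
by case: (hD i).
Qed.

Lemma state_sum n (S : 'M[C]_n) : is_state S -> \sum_i eigval S i = 1.
Proof.
move=> [hS htr]; have [HS _] := psd_spec hS.
have := @retr_conj _ _ (eigval S) (spectral_unitarymx S).
by rewrite -HS /retr htr.
Qed.

Lemma quad_dg n (w : 'rV[C]_n) (e : 'I_n -> R) :
  (w *m dg e *m adjmx w) 0 0 = \sum_j toC (e j) * (w 0 j * conjC (w 0 j)).
Proof.
rewrite mul_mx_diag !mxE; apply: eq_bigr => j _; rewrite !mxE.
by rewrite mulrAC mulrC.
Qed.

Lemma conj_psd n (V : 'M[C]_n) (e : 'I_n -> R) : V \is unitarymx -> (forall i, 0 <= e i) ->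
  psd (invmx V *m dg e *m V).
Proof.
move=> Vu he; rewrite unitary_inv //; split.
  by rewrite /Defs.hermitian !adjmx_mul adjmxK adjmx_dg mulmxA.
move=> v.
have -> : v *m (adjmx V *m dg e *m V) *m adjmx v = (v *m adjmx V) *m dg e *m adjmx (v *m adjmx V).
  by rewrite adjmx_mul adjmxK !mulmxA.
rewrite quad_dg.
apply: sumr_ge0 => j _; apply: mulr_ge0; first by rewrite toCE ler0c.
exact: mul_conjC_ge0.
Qed.

End PartA.

Fixpoint prodv {T : pzRingType} {d : nat} (q : 'I_d -> T) (k : nat) : 'I_(d ^ k.+1) -> T :=
  if k is k'.+1 then fun K => q (mxtens_unindex K).1 * prodv q k' (mxtens_unindex K).2
  else fun K => q K.

Fixpoint cnt {d : nat} (k : nat) : 'I_(d ^ k.+1) -> 'I_d -> nat :=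
  match k return 'I_(d ^ k.+1) -> 'I_d -> nat with
  | k'.+1 => fun (K : 'I_(d * d ^ k'.+1)) a =>
     (((mxtens_unindex K).1 == a) + cnt k' (mxtens_unindex K).2 a)%N
  | 0 => fun K a => (K == a :> nat)
  end.

Section PartB.
Variable R : realType.
Local Notation C := R[i].
Local Notation dg e := (diag_mx (\row_i toC (e i))).

Lemma tens_adj m n p q (A : 'M[C]_(m,n)) (B : 'M[C]_(p,q)) :
  adjmx (A *t B) = adjmx A *t adjmx B.
Proof. by apply/matrixP=> i j; rewrite !mxE rmorphM. Qed.

Lemma tens1 m p : (1%:M : 'M[C]_m) *t (1%:M : 'M[C]_p) = 1%:M.
Proof.
apply/matrixP=> i j.
case: (mxtens_indexP i)=> i0 i1; case: (mxtens_indexP j)=> j0 j1.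
rewrite tensmxE !mxE (can_eq (@mxtens_indexK _ _)) xpair_eqE.
by case: (i0 == j0); case: (i1 == j1); rewrite /= ?mulr1n ?mulr0n ?mulr1 ?mulr0.
Qed.

Lemma tens_unitary m p (U : 'M[C]_m) (V : 'M[C]_p) :
  U \is unitarymx -> V \is unitarymx -> U *t V \is unitarymx.
Proof.
move=> Uu Vu; apply/unitarymxP.
rewrite -adjmxE tens_adj tensmx_mul !adjmxE.
by rewrite (unitarymxP Uu) (unitarymxP Vu) tens1.
Qed.

Lemma tens_dg m p (a : 'I_m -> R) (b : 'I_p -> R) :
  dg a *t dg b = dg (fun K => a (mxtens_unindex K).1 * b (mxtens_unindex K).2).
Proof.
apply/matrixP=> i j.
case: (mxtens_indexP i)=> i0 i1; case: (mxtens_indexP j)=> j0 j1.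
rewrite tensmxE !mxE (can_eq (@mxtens_indexK _ _)) xpair_eqE mxtens_indexK /= toCM.
by case: (i0 == j0); case: (i1 == j1); rewrite /= ?mulr1n ?mulr0n ?mulr1 ?mulr0 ?mul0r.
Qed.

Lemma ntens_spec d (rho U : 'M[C]_d) (p : 'I_d -> R) :
  U \is unitarymx -> rho = invmx U *m dg p *m U ->
  forall k, ntensmx_rec U k \is unitarymx /\
    ntensmx_rec rho k = invmx (ntensmx_rec U k) *m dg (prodv p k) *m ntensmx_rec U k.
Proof.
move=> Uu Hr; elim=> [|k [IHu IHr]]; first by split.
have Vu : U *t ntensmx_rec U k \is unitarymx by apply: tens_unitary.
split; first exact: Vu.
change (rho *t ntensmx_rec rho k = invmx (U *t ntensmx_rec U k) *m dg (prodv p k.+1) *m (U *t ntensmx_rec U k)).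
rewrite {1}Hr IHr !unitary_inv // tens_adj -!tensmx_mul tens_dg.
by [].
Qed.

Lemma base_prod d (q : 'I_d -> R) (i : 'I_d) : \prod_a q a ^+ (i == a) = q i.
Proof.
rewrite (bigD1 i) //= eqxx expr1 big1 ?mulr1 // => a /negPf h.
by rewrite eq_sym h expr0.
Qed.

Lemma base_sum d (i : 'I_d) : (\sum_a (i == a) = 1)%N.
Proof.
rewrite (bigD1 i) //= eqxx big1 ?addn0 // => a /negPf h.
by rewrite eq_sym h.
Qed.

Lemma prodv_sum d (q : 'I_d -> R) k : \sum_K prodv q k K = (\sum_a q a) ^+ k.+1.
Proof.
elim: k => [|k IH]; first by rewrite expr1.
by rewrite exprS -IH mulr_sum.
Qed.

Lemma prodv_prod d (q : 'I_d -> R) k K : prodv q k K = \prod_a q a ^+ cnt k K a.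
Proof.
elim: k K => [|k IH] K.
  by rewrite /= -[K in LHS]/(K : 'I_d) -(base_prod q K).
rewrite /= IH -(base_prod q (mxtens_unindex K).1) -big_split /=.
by apply: eq_bigr => a _; rewrite exprD.
Qed.

Lemma cnt_sum d k K : (\sum_a @cnt d k K a = k.+1)%N.
Proof.
elim: k K => [|k IH] K.
  exact: (base_sum (K : 'I_d)).
by rewrite /= big_split /= IH base_sum.
Qed.

Lemma cnt_le d k K a : (@cnt d k K a <= k.+1)%N.
Proof.
by rewrite -(@cnt_sum d k K) (bigD1 a) //= leq_addr.
Qed.

Lemma prodv_ge0 d (q : 'I_d -> R) k K : (forall a, 0 <= q a) -> 0 <= prodv q k K.
Proof.
move=> h; rewrite prodv_prod; apply: prodr_ge0 => a _; exact: exprn_ge0.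
Qed.

End PartB.

Section PartC.
Variable R : realType.
Local Notation C := R[i].
Local Notation dg e := (diag_mx (\row_i toC (e i))).

Lemma shift_conj N (X V : 'M[C]_N) (mu : 'I_N -> R) (c : R) :
  V \is unitarymx -> X = invmx V *m dg mu *m V ->
  X - (toC c)%:M = invmx V *m dg (fun K => mu K - c) *m V.
Proof.
move=> Vu HX.
have -> : dg (fun K => mu K - c) = dg mu - (toC c)%:M.
  apply/matrixP=> i j; rewrite !mxE toCB.
  by case: (i == j); rewrite ?mulr1n ?mulr0n ?subr0.
rewrite mulmxBr mulmxBl -HX; congr (_ - _).
by rewrite mul_mx_scalar -scalemxAl mulVmx ?unitarymx_unit // scalemx1.
Qed.

Lemma proj_ge_trace N (X V : 'M[C]_N) (mu : 'I_N -> R) (c : R) :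
  V \is unitarymx -> X = invmx V *m dg mu *m V ->
  retr (proj_ge X c *m X) = \sum_K (if c <= mu K then mu K else 0).
Proof.
move=> Vu HX; rewrite /proj_ge /proj_ge0 (fcalc_eq _ _ Vu (shift_conj _ c Vu HX)).
rewrite [in X in _ *m X]HX conj_mul // retr_conj //; apply: eq_bigr => K _.
by rewrite subr_ge0; case: ifP; rewrite ?mul1r ?mul0r.
Qed.

Lemma proj_le_trace N (X V : 'M[C]_N) (mu : 'I_N -> R) (c : R) :
  V \is unitarymx -> X = invmx V *m dg mu *m V ->
  retr (proj_le X c *m X) = \sum_K (if mu K <= c then mu K else 0).
Proof.
move=> Vu HX; rewrite /proj_le /proj_le0 (fcalc_eq _ _ Vu (shift_conj _ c Vu HX)).
rewrite [in X in _ *m X]HX conj_mul // retr_conj //; apply: eq_bigr => K _.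
by rewrite subr_le0; case: ifP; rewrite ?mul1r ?mul0r.
Qed.

End PartC.

Section PartD.
Variable R : realType.
Local Notation C := R[i].
Local Notation dg e := (diag_mx (\row_i toC (e i))).

Lemma tr_conj n (V : 'M[C]_n) (a : 'I_n -> R) : V \is unitarymx ->
  \tr (invmx V *m dg a *m V) = toC (\sum_i a i).
Proof.
move=> Vu; rewrite mxtrace_mulC mulmxA mulmxV ?unitarymx_unit // mul1mx.
by rewrite mxtrace_diag toC_sum; apply: eq_bigr => i _; rewrite mxE.
Qed.

Lemma conj_sub n (V : 'M[C]_n) (a b : 'I_n -> R) :
  invmx V *m dg a *m V - invmx V *m dg b *m V = invmx V *m dg (fun i => a i - b i) *m V.
Proof.
rewrite -mulmxBl -mulmxBr; congr (_ *m _ *m _).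
by apply/matrixP=> i j; rewrite !mxE toCB; case: (i == j); rewrite ?mulr1n ?mulr0n ?subr0.
Qed.

Lemma ReB (x y : C) : complex.Re (x - y) = complex.Re x - complex.Re y.
Proof. by case: x; case: y. Qed.

Lemma ln2_gt0 : 0 < ln (2 : R).
Proof. by apply: ln_gt0; rewrite ltr1n. Qed.

Lemma xlnx_ge (x : R) : 0 <= x -> - 1 <= x * ln x.
Proof.
rewrite le_eqVlt => /orP[/eqP <-|x0]; first by rewrite mul0r lerN10.
have h := expR_ge1Dx (- ln x).
rewrite expRN lnK ?posrE // in h.
have h2 : x * (1 + - ln x) <= x * x^-1 by rewrite ler_wpM2l // ltW.
rewrite mulfV ?gt_eqF // in h2.
lra.
Qed.

Lemma sigma_state d (U : 'M[C]_d) (Q : 'I_d -> R) : U \is unitarymx ->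
  (forall a, 0 <= Q a) -> \sum_a Q a = 1 -> is_state (invmx U *m dg Q *m U).
Proof.
move=> Uu Q0 Q1; split; first exact: conj_psd.
by rewrite tr_conj // Q1.
Qed.

Lemma sigma_comm d (U : 'M[C]_d) (p Q : 'I_d -> R) : U \is unitarymx ->
  (invmx U *m dg p *m U) *m (invmx U *m dg Q *m U)
  = (invmx U *m dg Q *m U) *m (invmx U *m dg p *m U).
Proof.
move=> Uu; rewrite !conj_mul //; congr (_ *m diag_mx _ *m _).
by apply/rowP=> i; rewrite !mxE mulrC.
Qed.

Lemma sigma_vN d (U : 'M[C]_d) (Q : 'I_d -> R) : U \is unitarymx ->
  vN_entropy (invmx U *m dg Q *m U) = - \sum_a Q a * log2 (Q a).
Proof.
move=> Uu; rewrite /vN_entropy (fcalc_eq _ (@log2 R) Uu erefl) conj_mul // retr_conj //.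
Qed.

Lemma sigma_rel d (U : 'M[C]_d) (p Q : 'I_d -> R) : U \is unitarymx ->
  (forall a, p a = 0 -> Q a = 0) ->
  rel_entropy (invmx U *m dg Q *m U) (invmx U *m dg p *m U)
  = (\sum_a Q a * (log2 (Q a) - log2 (p a)))%:E.
Proof.
move=> Uu hQ; rewrite /rel_entropy.
have -> : (kermx (invmx U *m dg p *m U) <= kermx (invmx U *m dg Q *m U))%MS.
  have -> : invmx U *m dg Q *m U =
      (invmx U *m dg p *m U) *m (invmx U *m dg (fun a => Q a / p a) *m U).
    rewrite conj_mul //; congr (_ *m diag_mx _ *m _); apply/rowP=> a; rewrite !mxE.
    have [pa0|pa0] := eqVneq (p a) 0; first by rewrite pa0 hQ // mul0r.
    by rewrite mulrC divfK.
  set Y := invmx U *m dg p *m U.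
  rewrite sub_kermx; apply/eqP; apply: (etrans (mulmxA _ _ _)).
  by rewrite mulmx_ker mul0mx.
rewrite (fcalc_eq Q (@log2 R) Uu erefl) (fcalc_eq p (@log2 R) Uu erefl) conj_sub conj_mul //.
by rewrite retr_conj.
Qed.

Lemma ReD (x y : C) : complex.Re (x + y) = complex.Re x + complex.Re y.
Proof. by case: x; case: y. Qed.

Lemma Re_sum (I : finType) (F : I -> C) : complex.Re (\sum_i F i) = \sum_i complex.Re (F i).
Proof. by apply: (big_morph (@complex.Re R)) => //; exact: ReD. Qed.

Lemma log2_le0 (x : R) : x <= 1 -> log2 x <= 0.
Proof.
move=> h; rewrite /log2; apply: mulr_le0_ge0; first exact: ln_le0.
by rewrite invr_ge0 ltW // ln2_gt0.
Qed.

Lemma tr_mul_diag n (M : 'M[C]_n) (r : 'rV[C]_n) : \tr (M *m diag_mx r) = \sum_i M i i * r 0 i.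
Proof. by rewrite /mxtrace; apply: eq_bigr => i _; rewrite mul_mx_diag mxE. Qed.

Lemma cross_le0 d (sigma U : 'M[C]_d) (l : 'I_d -> R) : U \is unitarymx -> psd sigma ->
  (forall a, l a <= 0) -> retr (sigma *m (invmx U *m dg l *m U)) <= 0.
Proof.
move=> Uu hS hl; rewrite /retr mulmxA mxtrace_mulC !mulmxA tr_mul_diag Re_sum.
apply: sumr_le0 => i _; rewrite mxE.
have := psd_entry U i hS; rewrite -unitary_inv // => /ge0_toC [-> h].
by rewrite -toCM ReC; apply: mulr_ge0_le0.
Qed.

Lemma self_ge d (sigma : 'M[C]_d) : psd sigma ->
  - (d%:R / ln 2) <= retr (sigma *m fcalc (@log2 R) sigma).
Proof.
move=> hS; have [HS q0] := psd_spec hS.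
have Wu := spectral_unitarymx sigma.
rewrite (fcalc_eq _ (@log2 R) Wu HS) {1}HS conj_mul // retr_conj //.
have h : forall i : 'I_d, - (ln 2)^-1 <= eigval sigma i * log2 (eigval sigma i).
  move=> i; rewrite /log2 mulrA -mulN1r.
  by apply: ler_wpM2r; [rewrite invr_ge0 ltW // ln2_gt0 | exact: xlnx_ge].
apply: le_trans (ler_sum _ (fun i _ => h i)).
by rewrite sumr_const card_ord mulNrn -[(ln (2:R))^-1 *+ d]mulr_natl.
Qed.

Lemma rel_lb d (sigma rho U : 'M[C]_d) (p : 'I_d -> R) : U \is unitarymx ->
  rho = invmx U *m dg p *m U -> (forall a, p a <= 1) -> is_state sigma ->
  ((- (d%:R / ln 2))%:E <= rel_entropy sigma rho)%E.
Proof.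
move=> Uu Hr p1 [hS _]; rewrite /rel_entropy; case: ifP => _; last by rewrite leey.
rewrite lee_fin mulmxBr /retr linearB /= ReB -!/(retr _).
rewrite (fcalc_eq p (@log2 R) Uu Hr).
have h1 := self_ge hS.
have h2 : retr (sigma *m (invmx U *m dg (fun a => log2 (p a)) *m U)) <= 0.
  by apply: cross_le0 => // a; apply: log2_le0.
rewrite /retr in h1 h2. lra.
Qed.

End PartD.

Section PartE.
Variable R : realType.

Lemma pow2E (x : R) : powR 2 x = expR (x * ln 2).
Proof. by rewrite /powR pnatr_eq0. Qed.

Lemma pow2_lt (x y : R) : (powR 2 x < powR 2 y) = (x < y).
Proof.
rewrite !pow2E ltr_expR; apply/idP/idP => h.
  by rewrite -(ltr_pM2r (ln2_gt0 R)).
by rewrite ltr_pM2r // ln2_gt0.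
Qed.

Definition Qof d k (K : 'I_(d ^ k.+1)) (a : 'I_d) : R := (@cnt d k K a)%:R / (k.+1)%:R.
Arguments Qof {d k} K a.
Definition Dof d (p Q : 'I_d -> R) : R := \sum_a Q a * (log2 (Q a) - log2 (p a)).

Lemma Qof_ge0 d k (K : 'I_(d ^ k.+1)) a : 0 <= Qof K a.
Proof. by rewrite /Qof divr_ge0 // ler0n. Qed.

Lemma Qof_sum d k (K : 'I_(d ^ k.+1)) : \sum_a Qof K a = 1.
Proof. by rewrite /Qof -mulr_suml -natr_sum cnt_sum mulfV // pnatr_eq0. Qed.

Lemma natexp (x : R) (t : nat) : (t = 0)%N \/ 0 < x -> x ^+ t = powR 2 (t%:R * log2 x).
Proof.
case=> [->|x0]; first by rewrite expr0 mul0r powRr0.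
rewrite pow2E /log2 mulrA divfK; last by rewrite gt_eqF // ln2_gt0.
by rewrite expRM_natl lnK // posrE.
Qed.

Lemma prod_pow2 (I : finType) (F : I -> R) : \prod_i powR 2 (F i) = powR 2 (\sum_i F i).
Proof.
rewrite pow2E mulr_suml expR_sum; apply: eq_bigr => i _; exact: pow2E.
Qed.

Lemma prodv_exp d k (q : 'I_d -> R) K : (forall a, (@cnt d k K a = 0)%N \/ 0 < q a) ->
  prodv q k K = powR 2 ((k.+1)%:R * \sum_a Qof K a * log2 (q a)).
Proof.
move=> h; rewrite prodv_prod (eq_bigr _ (fun a _ => @natexp _ _ (h a))) prod_pow2.
congr powR; rewrite mulr_sumr; apply: eq_bigr => a _.
by rewrite /Qof; field; rewrite nat1r pnatr_eq0.
Qed.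

Lemma mu_exp d k (p : 'I_d -> R) K : (forall a, 0 <= p a) -> 0 < prodv p k K ->
  prodv p k K = powR 2 ((k.+1)%:R * \sum_a Qof K a * log2 (p a)).
Proof.
move=> p0 mu0; apply: prodv_exp => a.
have [c0|c0] := eqVneq (cnt k K a) 0%N; first by left.
right; rewrite lt_def p0 andbT; apply/eqP => pa0.
move: mu0; rewrite prodv_prod (bigD1 a) //= pa0 expr0n (negPf c0) mul0r.
by rewrite ltxx.
Qed.

Lemma Qn_exp d k (K : 'I_(d ^ k.+1)) :
  prodv (@Qof d k K) k K = powR 2 ((k.+1)%:R * \sum_a Qof K a * log2 (Qof K a)).
Proof.
apply: prodv_exp => a.
have [c0|c0] := eqVneq (cnt k K a) 0%N; first by left.
by right; rewrite /Qof divr_gt0 // ltr0n lt0n.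
Qed.

Lemma mu_decomp d k (p : 'I_d -> R) K : (forall a, 0 <= p a) -> 0 < prodv p k K ->
  prodv p k K = prodv (Qof K) k K * powR 2 (- ((k.+1)%:R * Dof p (Qof K))).
Proof.
move=> p0 mu0; rewrite mu_exp // Qn_exp -powRD; last by rewrite pnatr_eq0 implybT.
congr powR; rewrite /Dof -mulrN -mulrDr; congr (_ * _).
rewrite -sumrN -big_split; apply: eq_bigr => a _ /=; ring.
Qed.

Lemma HD_eq d (p Q : 'I_d -> R) :
  - \sum_a Q a * log2 (p a) = - \sum_a Q a * log2 (Q a) + Dof p Q.
Proof.
rewrite /Dof -sumrN -sumrN -big_split; apply: eq_bigr => a _ /=; ring.
Qed.

Lemma bad_lt d k (p : 'I_d -> R) K (s : R) : (forall a, 0 <= p a) -> 0 < prodv p k K ->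
  (prodv p k K < powR 2 (- ((k.+1)%:R * s))) = (s < - \sum_a Qof K a * log2 (p a)).
Proof.
move=> p0 mu0; rewrite mu_exp // pow2_lt -mulrN ltr_pM2l ?ltr0n //.
by rewrite ltrNr.
Qed.

Lemma bad_gt d k (p : 'I_d -> R) K (s : R) : (forall a, 0 <= p a) -> 0 < prodv p k K ->
  (powR 2 (- ((k.+1)%:R * s)) < prodv p k K) = (- \sum_a Qof K a * log2 (p a) < s).
Proof.
move=> p0 mu0; rewrite mu_exp // pow2_lt -mulrN ltr_pM2l ?ltr0n //.
by rewrite ltrNl.
Qed.

Lemma prodv_ext d k (q q' : 'I_d -> R) K : (forall a, q a = q' a) -> prodv q k K = prodv q' k K.
Proof. by move=> h; rewrite !prodv_prod; apply: eq_bigr => a _; rewrite h. Qed.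

Definition tv d k (K : 'I_(d ^ k.+1)) : {ffun 'I_d -> 'I_k.+2} := [ffun a => inord (cnt k K a)].
Arguments tv {d k} K.
Definition Qt d k (t : {ffun 'I_d -> 'I_k.+2}) (a : 'I_d) : R := (t a : nat)%:R / (k.+1)%:R.

Arguments Qt {d k} t a.
Lemma Qof_tv d k (K : 'I_(d ^ k.+1)) a : Qof K a = Qt (tv K) a.
Proof. by rewrite /Qt /tv ffunE inordK // ltnS cnt_le. Qed.

Lemma sum_sub_le (I : finType) (P : pred I) (F : I -> R) : (forall i, 0 <= F i) ->
  \sum_(i | P i) F i <= \sum_i F i.
Proof.
move=> F0; rewrite [leRHS](bigID P) /= lerDl; exact: sumr_ge0.
Qed.

Lemma sumQn_le d k : \sum_(K : 'I_(d ^ k.+1)) prodv (Qof K) k K <= (1 + (k.+1)%:R) ^+ d.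
Proof.
rewrite (eq_bigr (fun K => prodv (Qt (tv K)) k K)); last first.
  by move=> K _; apply: prodv_ext => a; rewrite Qof_tv.
rewrite (partition_big (@tv d k) xpredT) //=.
apply: (@le_trans _ _ (\sum_(t : {ffun 'I_d -> 'I_k.+2}) 1)).
  apply: ler_sum => t _.
  rewrite (eq_bigr (fun K => prodv (Qt t) k K)); last by move=> K /eqP ->.
  case: (pickP (fun K => tv K == t)) => [K0 /eqP hK0 | none]; last first.
    by rewrite big_pred0 // => K; rewrite none.
  have hF : forall K, 0 <= prodv (Qt t) k K.
    by move=> K; apply: prodv_ge0 => a; rewrite /Qt divr_ge0 // ler0n.
  apply: (le_trans (@sum_sub_le _ (fun i => tv i == t) _ hF)).
  rewrite prodv_sum (_ : \sum_a Qt t a = 1) ?expr1n //.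
  by rewrite -(@Qof_sum d k K0); apply: eq_bigr => a _; rewrite Qof_tv hK0.
by rewrite sumr_const card_ffun !card_ord natrX nat1r.
Qed.

Lemma types_bound d k (p : 'I_d -> R) (B : pred 'I_(d ^ k.+1)) (r : R) :
  (forall a, 0 <= p a) ->
  (forall K, B K -> 0 < prodv p k K -> r <= Dof p (Qof K)) ->
  \sum_(K | B K) prodv p k K <= (1 + (k.+1)%:R) ^+ d * powR 2 (- ((k.+1)%:R * r)).
Proof.
move=> p0 hB; set c := powR 2 _.
have Qn0 : forall K : 'I_(d ^ k.+1), 0 <= prodv (Qof K) k K.
  by move=> K; apply: prodv_ge0 => a; exact: Qof_ge0.
have step : forall K, B K -> prodv p k K <= prodv (Qof K) k K * c.
  move=> K BK; have := @prodv_ge0 R _ p k K p0; rewrite le_eqVlt => /orP[/eqP <-|mu0].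
    by apply: mulr_ge0; [exact: Qn0 | exact: powR_ge0].
  rewrite mu_decomp //; apply: ler_wpM2l; first exact: Qn0.
  rewrite /c; apply: ler_powR; first by rewrite ler1n.
  by rewrite lerN2 ler_pM2l ?ltr0n //; apply: hB.
apply: le_trans (ler_sum _ step) _.
rewrite -mulr_suml mulrC [leRHS]mulrC; apply: ler_wpM2l; first exact: powR_ge0.
apply: (le_trans (@sum_sub_le _ B _ Qn0)); exact: sumQn_le.
Qed.

Lemma supp_Qof d k (p : 'I_d -> R) (K : 'I_(d ^ k.+1)) a :
  0 < prodv p k K -> p a = 0 -> Qof K a = 0.
Proof.
move=> mu0 pa0; rewrite /Qof; have [c0|c0] := eqVneq (cnt k K a) 0%N; first by rewrite c0 mul0r.
by move: mu0; rewrite prodv_prod (bigD1 a) //= pa0 expr0n (negPf c0) mul0r ltxx.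
Qed.

Lemma split_sum (I : finType) (F : I -> R) (P : pred I) :
  \sum_i F i = \sum_i (if P i then 0 else F i) + \sum_(i | P i) F i.
Proof.
rewrite [X in _ + X]big_mkcond /= -big_split /=; apply: eq_bigr => i _.
by case: (P i); rewrite ?add0r ?addr0.
Qed.

End PartE.
Arguments Qof {R d k} K a.
Arguments Dof {R d} p Q.

Theorem proposition2 (R : realType) (dA : nat) (rho : 'M[R[i]]_dA) (gamma : R) :
  is_state rho -> 0 < gamma ->
  forall n : nat, (0 < n)%N ->
    (sup_spec_entropy (eps_of n dA (Dbar rho gamma)) (ntensmx rho n)
       <= (n%:R * (vN_entropy rho + gamma))%:E)%E /\
    ((n%:R * (vN_entropy rho - gamma))%:E
       <= inf_spec_entropy (eps_of n dA (Dund rho gamma)) (ntensmx rho n))%E.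
Proof.
move=> hrho g0 [//|k] _.
have [Hr p0] := psd_spec hrho.1.
set U := spectralmx rho in Hr *; set p := eigval rho in Hr p0 *.
have Uu : U \is unitarymx := spectral_unitarymx rho.
have psum : \sum_a p a = 1 := state_sum hrho.
have p1 : forall a, p a <= 1.
  by move=> a; rewrite -psum (bigD1 a) //= lerDl sumr_ge0.
have [Vu HX] := ntens_spec p Uu Hr k.
set V := ntensmx_rec U k in Vu HX.
set mu := prodv p k in HX.
have HX' : ntensmx rho k.+1 = invmx V *m diag_mx (\row_i toC (mu i)) *m V by exact: HX.
have musum : \sum_K mu K = 1 by rewrite /mu prodv_sum psum expr1n.
have mu0 : forall K, 0 <= mu K by move=> K; exact: prodv_ge0.
set S := vN_entropy rho.
pose sig (K : 'I_(dA ^ k.+1)) := invmx U *m diag_mx (\row_i toC (Qof K i)) *m U.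
have sig_state : forall K, is_state (sig K).
  by move=> K; apply: sigma_state => //; [exact: Qof_ge0 | exact: Qof_sum].
have sig_comm : forall K, rho *m sig K = sig K *m rho.
  by move=> K; rewrite Hr; apply: sigma_comm.
have sig_vN_rel : forall K, 0 < mu K ->
    ((vN_entropy (sig K))%:E + rel_entropy (sig K) rho =
     (- \sum_a Qof K a * log2 (p a))%:E)%E /\
    rel_entropy (sig K) rho = (Dof p (Qof K))%:E.
  move=> K muK; have hrel : rel_entropy (sig K) rho = (Dof p (Qof K))%:E.
    by rewrite Hr sigma_rel // => a; apply: supp_Qof.
  by rewrite hrel sigma_vN // -EFinD -HD_eq.
have lbD : forall (P : _ -> Prop), ((- (dA%:R / ln (2:R)))%:E <=
    ereal_inf [set rel_entropy sigma rho | sigma in [set sigma | is_state sigma /\ P sigma]])%E.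
  move=> P; apply/ereal_infP => _ [sigma [hs _] <-].
  exact: rel_lb Uu Hr p1 hs.
split.
- set c := powR 2 (- (k.+1%:R * (S + gamma))).
  have hbad : forall K, mu K < c -> 0 < mu K -> (Dbar rho gamma <= (Dof p (Qof K))%:E)%E.
    move=> K hK hpos; have [h1 h2] := sig_vN_rel K hpos.
    rewrite -h2; apply: ereal_inf_lbound; exists (sig K) => //; split; first exact: sig_state.
    split; first exact: sig_comm.
    by rewrite h1 lte_fin -(bad_lt R k p K (S + gamma) p0 hpos).
  have hX : \sum_(K | mu K < c) mu K <= eps_of k.+1 dA (Dbar rho gamma).
    have hlb : ((- (dA%:R / ln (2:R)))%:E <= Dbar rho gamma)%E := lbD _.
    case hD : (Dbar rho gamma) hlb => [r| |] hlb /=.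
    + apply: types_bound => // K hK hpos.
      by have := hbad K hK hpos; rewrite hD lee_fin.
    + apply: sumr_le0 => K hK; rewrite leNgt; apply/negP => hpos.
      by have := hbad K hK hpos; rewrite hD.
    + by [].
  apply: ereal_inf_lbound; exists (k.+1%:R * (S + gamma)) => //.
  have E := proj_ge_trace mu c Vu HX'.
  suff h : 1 - eps_of k.+1 dA (Dbar rho gamma) <= \sum_K (if c <= mu K then mu K else 0) by apply: (le_trans h); rewrite le_eqVlt; apply/orP; left; apply/eqP; exact: (esym E).
  have -> : \sum_K (if c <= mu K then mu K else 0) = 1 - \sum_(K | mu K < c) mu K.
    rewrite -musum (split_sum R _ mu (fun K => mu K < c)) addrK; apply: eq_bigr => K _.
    by rewrite ltNge; case: (c <= mu K).
  lra.
- set c := powR 2 (- (k.+1%:R * (S - gamma))).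
  have hbad : forall K, c < mu K -> (Dund rho gamma <= (Dof p (Qof K))%:E)%E.
    move=> K hK; have hpos : 0 < mu K by apply: le_lt_trans hK; exact: powR_ge0.
    have [h1 h2] := sig_vN_rel K hpos.
    rewrite -h2; apply: ereal_inf_lbound; exists (sig K) => //; split; first exact: sig_state.
    split; first exact: sig_comm.
    by rewrite h1 lte_fin -(bad_gt R k p K (S - gamma) p0 hpos).
  have hX : \sum_(K | c < mu K) mu K <= eps_of k.+1 dA (Dund rho gamma).
    have hlb : ((- (dA%:R / ln (2:R)))%:E <= Dund rho gamma)%E := lbD _.
    case hD : (Dund rho gamma) hlb => [r| |] hlb /=.
    + apply: types_bound => // K hK hpos.
      by have := hbad K hK; rewrite hD lee_fin.
    + apply: sumr_le0 => K hK.
      by have := hbad K hK; rewrite hD.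
    + by [].
  apply: ereal_sup_ubound; exists (k.+1%:R * (S - gamma)) => //.
  have E := proj_le_trace mu c Vu HX'.
  suff h : 1 - eps_of k.+1 dA (Dund rho gamma) <= \sum_K (if mu K <= c then mu K else 0) by apply: (le_trans h); rewrite le_eqVlt; apply/orP; left; apply/eqP; exact: (esym E).
  have -> : \sum_K (if mu K <= c then mu K else 0) = 1 - \sum_(K | c < mu K) mu K.
    rewrite -musum (split_sum R _ mu (fun K => c < mu K)) addrK; apply: eq_bigr => K _.
    by rewrite ltNge; case: (mu K <= c).
  lra.
Qed.
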